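(* For all $n\ge 1$ and $0\le k\le \lfloor n/2\rfloor$, $$W(n+1,k)=2^{n-k}S(n,k).$$ Moreover, for $n\ge 1$, $$S_n(x)=\frac{1}{2^{n+1}x}\sum_{k=0}^{\lfloor n/2\rfloor+1}p(n+1,n-2k+2)\,(2x-1)^k,$$ where for positive integers $m$ and integers $k$ we set $$p(m,m-2k+1)=(-1)^{k}\sum_{i\ge 1} i!\,{m\brace i}\,(-2)^{m-i}\left[\binom{i}{m-2k}-\binom{i}{m-2k+1}\right],$$ with ${m\brace i}$ the Stirling numbers of the second kind.
   Context: For a permutation $\pi=\pi(1)\cdots\pi(n)$ of $[n]=\{1,\dots,n\}$, a descent is an index $i\in[n-1]$ with $\pi(i)>\pi(i+1)$, and ${\rm des}(\pi)$ is the number of descents. A double descent is an index $i\in[n-2]$ with $\pi(i)>\pi(i+1)>\pi(i+2)$. The permutation $\pi$ is simsun if for every $k\in[n]$, the subword of $\pi$ consisting of the letters in $[k]$ (in the order they appear in $\pi$) has no double descents. Let $\mathcal{RS}_n$ be the set of simsun permutations of $[n]$, $S(n,k)=\#\{\pi\in\mathcal{RS}_n:{\rm des}(\pi)=k\}$ and $S_n(x)=\sum_k S(n,k)x^k$. An interior peak of $\pi\in\mathfrak S_n$ is an index $i\in\{2,\dots,n-1\}$ with $\pi(i-1)<\pi(i)>\pi(i+1)$; $W(n,k)$ denotes the number of permutations in $\mathfrak S_n$ with exactly $k$ interior peaks. *)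

(* Defs.v *)
From HB Require Import structures.
From mathcomp Require Import all_boot all_order all_algebra all_fingroup.
Set Implicit Arguments. Unset Strict Implicit. Unset Printing Implicit Defensive.
Import Order.TTheory GRing.Theory Num.Theory.

(* A permutation pi of [n] is represented by s : 'S_n, i.e. a permutation of
   {0,...,n-1}; its one-line word is pi(1) ... pi(n) shifted down by 1
   (this does not affect any order comparison). *)
Definition word (n : nat) (s : 'S_n) : seq nat := [seq val (s i) | i <- enum 'I_n].

Definition des (w : seq nat) : nat :=
  count (fun i => nth 0 w i > nth 0 w i.+1) (iota 0 (size w).-1).

Definition has_ddes (w : seq nat) : bool :=
  has (fun i => (nth 0 w i > nth 0 w i.+1) && (nth 0 w i.+1 > nth 0 w i.+2))
      (iota 0 (size w - 2)).

(* simsun: for every k in [n], the subword of letters in [k] (values < k in the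
   0-based encoding) has no double descent *)
Definition simsun (w : seq nat) : bool :=
  all (fun k => ~~ has_ddes [seq a <- w | a < k]) (iota 1 (size w)).

(* interior peaks: positions 2..n-1 (1-based), i.e. 1..n-2 (0-based) *)
Definition ipeaks (w : seq nat) : nat :=
  count (fun i => (nth 0 w i.-1 < nth 0 w i) && (nth 0 w i > nth 0 w i.+1))
        (iota 1 (size w - 2)).

Definition Snk (n k : nat) : nat :=
  #|[set s : 'S_n | simsun (word s) && (des (word s) == k)]|.

Definition Wnk (n k : nat) : nat :=
  #|[set s : 'S_n | ipeaks (word s) == k]|.

(* S_n(x) = sum_k S(n,k) x^k  (descents are at most n-1, so k < n suffices) *)
Definition Spoly_eval (R : nzRingType) (n : nat) (x : R) : R :=
  (\sum_(k < n) (Snk n k)%:R * x ^+ k)%R.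

Fixpoint stirling2 (m i : nat) : nat :=
  match m, i with
  | 0, 0 => 1
  | 0, _.+1 => 0
  | _.+1, 0 => 0
  | m'.+1, i'.+1 => i'.+1 * stirling2 m' i'.+1 + stirling2 m' i'
  end.

Definition binz (i : nat) (j : int) : int :=
  match j with Posz j' => ('C(i, j'))%:Z | Negz _ => 0%R end.

(* pp m k := p(m, m - 2k + 1)
   = (-1)^k sum_{i>=1} i! S2(m,i) (-2)^(m-i) [C(i, m-2k) - C(i, m-2k+1)];
   terms with i > m vanish since S2(m,i) = 0. *)
Definition pp (m : nat) (k : int) : int :=
  ((-1) ^+ `|k|%N *
   \sum_(1 <= i < m.+1)
     ((i`! * stirling2 m i)%:Z * (-2) ^+ (m - i) *
      (binz i (m%:Z - 2 * k) - binz i (m%:Z - 2 * k + 1))))%R.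

(* Main.v *)
Require Import Defs.
From mathcomp Require Import all_boot all_order all_algebra all_fingroup.
From mathcomp Require Import zify ring.
Import Order.TTheory GRing.Theory Num.Theory.

Definition ins (j a : nat) (w : seq nat) := take j w ++ a :: drop j w.

Fixpoint perms (n : nat) : seq (seq nat) :=
  if n is m.+1 then [seq ins j m w | w <- perms m, j <- iota 0 m.+1]
  else [:: [::]].

Lemma permsS n : perms n.+1 = [seq ins j n w | w <- perms n, j <- iota 0 n.+1].
Proof. by []. Qed.

Definition okw n (w : seq nat) := [&& size w == n, uniq w & all (fun a => a < n) w].

Lemma size_ins j a w : size (ins j a w) = (size w).+1.
Proof. by rewrite /ins size_cat /= size_take size_drop; case: leqP; lia. Qed.

Lemma mem_ins j a w x : (x \in ins j a w) = (x == a) || (x \in w).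
Proof.
by rewrite /ins mem_cat in_cons orbCA -mem_cat cat_take_drop.
Qed.

Lemma uniq_ins j a w : a \notin w -> uniq w -> uniq (ins j a w).
Proof.
move=> aw uw.
have h : uniq (a :: take j w ++ drop j w) by rewrite cat_take_drop /= aw.
rewrite /ins.
have p : perm_eq (take j w ++ [:: a] ++ drop j w) (a :: take j w ++ drop j w)
  by rewrite perm_catCA perm_refl.
by rewrite (perm_uniq p).
Qed.

Lemma perms_ok n w : w \in perms n -> okw n w.
Proof.
elim: n w => [|n IH] w; first by rewrite inE => /eqP->.
rewrite permsS; case/allpairsP => [[v j] [/= /IH /and3P [/eqP sv uv av] _ ->]].
have nin : n \notin v by apply/negP => /(allP av); rewrite ltnn.
rewrite /okw size_ins sv eqxx uniq_ins //=.
apply/allP => x; rewrite mem_ins => /orP [/eqP ->//|/(allP av)]; lia.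
Qed.

Lemma rem_mid (x : nat) l1 l2 : x \notin l1 -> rem x (l1 ++ x :: l2) = l1 ++ l2.
Proof.
elim: l1 => [|y l1 IH] /=; first by rewrite eqxx.
rewrite inE negb_or => /andP [ne ni]; rewrite eq_sym (negbTE ne) IH //.
Qed.

Lemma perms_uniq n : uniq (perms n).
Proof.
elim: n => [|n IH] //.
rewrite permsS; apply: allpairs_uniq => //; first exact: iota_uniq.
move=> [v1 j1] [v2 j2] /allpairsP [[v j] [H1 H2 E1]].
move=> /allpairsP [[v' j'] [H1' H2' E2]].
case: E1 => -> ->; case: E2 => -> -> /= E.
rewrite /= in H1 H1'; rewrite mem_iota /= in H2; rewrite mem_iota /= in H2'.
have /and3P [/eqP s1 _ a1] := perms_ok _ _ H1.
have /and3P [/eqP s2 _ a2] := perms_ok _ _ H1'.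
have n1 : n \notin v by apply/negP => /(allP a1); rewrite ltnn.
have n2 : n \notin v' by apply/negP => /(allP a2); rewrite ltnn.

have ix : forall j v, n \notin v -> j <= size v -> index n (ins j n v) = j.
  move=> jj vv nv jv; rewrite /ins index_cat.
  have -> : n \in take jj vv = false.
    by apply/negP => /mem_take; apply/negP.
  by rewrite size_takel //= eqxx addn0.
have rx : forall j v, n \notin v -> rem n (ins j n v) = v.
  move=> jj vv nv; rewrite /ins rem_mid ?cat_take_drop //.
  by apply/negP => /mem_take; apply/negP.
have ej : j = j'.
  have h1 := ix j v n1; have h2 := ix j' v' n2.
  rewrite -h1; [|by rewrite s1; lia]. by rewrite E h2 // s2; lia.
by rewrite -(rx j v) // E rx // ej.
Qed.

Lemma size_perms n : size (perms n) = n`!.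
Proof.
elim: n => [|n IH] //; rewrite permsS size_allpairs IH size_iota factS; lia.
Qed.

Lemma card_countT (T : finType) (P : pred T) : #|[set s : T | P s]| = count P (enum T).
Proof. rewrite cardsE cardE /enum_mem size_filter count_filter; by apply: eq_count => x /=; rewrite !inE andbT. Qed.

Lemma word_inj n : injective (@word n).
Proof.
move=> s t E; apply/permP => i; apply: val_inj.
have := (eq_in_map _ _ (enum 'I_n)).2 E i; rewrite mem_enum; exact.
Qed.

Lemma perms_word n w : w \in perms n -> exists s : 'S_n, word s = w.
Proof.
move/perms_ok/and3P => [/eqP sw uw aw].
have H : forall i : 'I_n, nth 0 w i < n.
  by move=> i; apply: (allP aw); apply: mem_nth; rewrite sw.
pose f := fun i : 'I_n => Ordinal (H i).
have fi : injective f.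
  move=> i j /(congr1 val) /= E; apply: val_inj => /=.
  by apply/eqP; rewrite -(nth_uniq 0 _ _ uw) ?E // sw.
exists (perm fi); rewrite /word.
rewrite (eq_map (g := fun i : 'I_n => nth 0 w i)); last by move=> i; rewrite permE.
rewrite (map_comp (nth 0 w) val) val_enum_ord -sw; exact: mkseq_nth.
Qed.

Lemma card_perms n (P : pred (seq nat)) :
  #|[set s : 'S_n | P (word s)]| = count P (perms n).
Proof.
rewrite card_countT -(count_map (@word n) P).
suff pe : perm_eq (map (@word n) (enum 'S_n)) (perms n) by move/seq.permP: pe => ->.
apply: uniq_perm.
- by rewrite map_inj_uniq ?enum_uniq //; exact: word_inj.
- exact: perms_uniq.
have [] := uniq_min_size (perms_uniq n) (s2 := map (@word n) (enum 'S_n)).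
- move=> w /perms_word [s <-]; apply: map_f; by rewrite mem_enum.
- by rewrite size_map size_perms -cardE card_Sn.
by move=> _ E w; rewrite E.
Qed.

Lemma nth_ins j a w i : j <= size w ->
  nth 0 (ins j a w) i = if i < j then nth 0 w i else if i == j then a else nth 0 w i.-1.
Proof.
move=> jw; rewrite /ins nth_cat size_takel //.
case: ltnP => h1; first by rewrite nth_take.
case: eqVneq => h2; first by rewrite h2 subnn.
have -> : i - j = (i - j).-1.+1 by lia.
by rewrite /= nth_drop; congr nth; lia.
Qed.

Definition Pb (w : seq nat) i : bool :=
  [&& 0 < i, i.+1 < size w, nth 0 w i.-1 < nth 0 w i & nth 0 w i.+1 < nth 0 w i].

Lemma Pb_ins j a w i : j <= size w -> all (fun x => x < a) w ->
  (Pb (ins j a w) i : nat) =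
  ((i.+1 < j) && Pb w i) + ((i == j) && (0 < j < size w)) + ((j.+1 < i) && Pb w i.-1).
Proof.
move=> jw aw.
have B : forall k, k < size w -> nth 0 w k < a.
  by move=> k kw; apply: (allP aw); apply: mem_nth.
case: i => [|i]; first by rewrite /Pb /=; lia.
have B0 := B i; have B1 := B i.+1.
rewrite /Pb size_ins !nth_ins //=.
repeat case: ifP => ?; lia.
Qed.

Lemma sum_eq1 (F : nat -> nat) j N : j < N ->
  \sum_(0 <= i < N) ((i == j) * F i) = F j.
Proof.
elim: N => [|N IH] // jN; rewrite big_nat_recr //=.
case: (ltngtP j N) => h.
- by rewrite IH //; case: (N =P j) => ?; lia.
- lia.
- subst j; rewrite big1_seq; first by case: (N =P N) => ?; lia.
  move=> i; rewrite mem_index_iota => hi; case: (i =P N) => ?; lia.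
Qed.

Lemma count_iota_sum (f : pred nat) a m N : a + m <= N ->
  count f (iota a m) = \sum_(0 <= i < N) ((a <= i < a + m) && f i).
Proof.
elim: m => [|m IH] h.
  by rewrite big1 //= => i _; lia.
rewrite -addn1 iotaD count_cat IH; last lia.
rewrite /= addn0.
have -> : (f (a + m) : nat) = \sum_(0 <= i < N) ((i == a + m) * f i) by rewrite sum_eq1 //; lia.
rewrite -big_split /=; apply: eq_big_nat => i _.
case: (f i); case: eqVneq => ?; lia.
Qed.

Lemma count_sum0 (f : pred nat) N : count f (iota 0 N) = \sum_(0 <= i < N) f i.
Proof. by rewrite (count_iota_sum _ _ _ N) //; apply: eq_big_nat => i /=; lia. Qed.

Lemma sum_shift (G : nat -> nat) N : G 0 = 0 ->
  \sum_(0 <= i < N.+1) G i = \sum_(0 <= i < N) G i.+1.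
Proof. by move=> h; rewrite big_nat_recl // h. Qed.

Lemma sum_ext (G : nat -> nat) M N : M <= N -> (forall i, M <= i -> G i = 0) ->
  \sum_(0 <= i < N) G i = \sum_(0 <= i < M) G i.
Proof.
move=> MN h; rewrite (@big_cat_nat _ _ _ M) //= [X in _ + X]big1_seq ?addn0 //.
by move=> i /andP [_]; rewrite mem_index_iota => /andP [hi _]; apply: h.
Qed.

Lemma ipeaks_sum w N : 0 < N -> size w <= N -> ipeaks w = \sum_(0 <= i < N) Pb w i.
Proof.
move=> h0 h; rewrite /ipeaks (count_iota_sum _ _ _ N); last lia.
apply: eq_big_nat => i _; rewrite /Pb.
case: (nth 0 w i.-1 < nth 0 w i); case: (nth 0 w i.+1 < nth 0 w i); lia.
Qed.

Definition Db (w : seq nat) i : bool := (i.+1 < size w) && (nth 0 w i.+1 < nth 0 w i).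

Lemma des_sum w N : size w <= N -> des w = \sum_(0 <= i < N) Db w i.
Proof.
move=> h; rewrite /des (count_iota_sum _ _ _ N); last lia.
apply: eq_big_nat => i _; rewrite /Db.
case: (nth 0 w i.+1 < nth 0 w i); lia.
Qed.

Definition dd (w : seq nat) i : bool :=
  [&& i.+2 < size w, nth 0 w i.+1 < nth 0 w i & nth 0 w i.+2 < nth 0 w i.+1].

Lemma hdd_sum w N : size w <= N -> has_ddes w = (0 < \sum_(0 <= i < N) dd w i).
Proof.
move=> h; rewrite /has_ddes has_count (count_iota_sum _ _ _ N); last lia.
congr (0 < _); apply: eq_big_nat => i _; rewrite /dd.
case: (nth 0 w i.+1 < nth 0 w i); case: (nth 0 w i.+2 < nth 0 w i.+1); lia.
Qed.

Lemma Db_ins j a w i : j <= size w -> all (fun x => x < a) w ->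
  (Db (ins j a w) i : nat) =
  ((i.+1 < j) && Db w i) + ((i == j) && (j < size w)) + ((j < i) && Db w i.-1).
Proof.
move=> jw aw.
have B : forall k, k < size w -> nth 0 w k < a.
  by move=> k kw; apply: (allP aw); apply: mem_nth.
have B0 := B i; have B1 := B i.+1; have B2 := B i.-1.
rewrite /Db size_ins !nth_ins //=.
case: i B0 B1 B2 => [|i] B0 B1 B2 /=; repeat case: ifP => ?;
  try (match goal with H : is_true (_ == _) |- _ => move/eqP: H => H; subst j end); lia.
Qed.

Lemma dd_ins j a w i : j <= size w -> all (fun x => x < a) w ->
  (dd (ins j a w) i : nat) =
  ((i.+2 < j) && dd w i) + ((i == j) && Db w j) + ((j < i) && dd w i.-1).
Proof.
move=> jw aw.
have B : forall k, k < size w -> nth 0 w k < a.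
  by move=> k kw; apply: (allP aw); apply: mem_nth.
have B0 := B i; have B1 := B i.+1; have B2 := B i.+2; have B3 := B i.-1.
rewrite /dd /Db size_ins !nth_ins //=.
case: i B0 B1 B2 B3 => [|i] B0 B1 B2 B3 /=; repeat case: ifP => ?;
  try (match goal with H : is_true (_ == _) |- _ => move/eqP: H => H; subst j end); lia.
Qed.

Lemma sum_eq1S (F : nat -> nat) j N : j <= N -> F 0 = 0 ->
  \sum_(0 <= i < N) ((i.+1 == j) * F i) = F j.-1.
Proof.
move=> jN F0; case: j jN => [|j] jN.
  by rewrite big1 // => i _.
rewrite (eq_big_nat _ _ (F2 := fun i => (i == j) * F i)); last by [].
by rewrite sum_eq1.
Qed.

Lemma ipeaks_ins j a w : j <= size w -> all (fun x => x < a) w ->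
  ipeaks (ins j a w) + Pb w j.-1 + Pb w j = ipeaks w + (0 < j < size w).
Proof.
move=> jw aw.
set s := size w.
rewrite (ipeaks_sum _ s.+2) ?size_ins //.
rewrite (ipeaks_sum w s.+2) //; last lia.
under eq_big_nat => i _ do rewrite Pb_ins //.
rewrite !big_split /=.
have E1 : \sum_(0 <= i < s.+2) ((i == j) && (0 < j < s) : nat) = (0 < j < s).
  rewrite -(sum_eq1 (fun _ => (0 < j < s) : nat) j s.+2); last lia.
  by apply: eq_big_nat => i _; case: (i =P j) => ?; case: (0 < j < s); lia.
have E2 : \sum_(0 <= i < s.+2) ((j.+1 < i) && Pb w i.-1 : nat) =
          \sum_(0 <= i < s.+2) ((j < i) && Pb w i : nat).
  rewrite sum_shift //= (sum_ext _ s.+1 s.+2) //.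
  move=> i hi; rewrite /Pb; lia.
have E3 : \sum_(0 <= i < s.+2) (Pb w i : nat) =
   \sum_(0 <= i < s.+2) ((i.+1 < j) && Pb w i : nat) +
   \sum_(0 <= i < s.+2) ((i.+1 == j) * Pb w i) +
   \sum_(0 <= i < s.+2) ((i == j) * Pb w i) +
   \sum_(0 <= i < s.+2) ((j < i) && Pb w i : nat).
  rewrite -!big_split /=; apply: eq_big_nat => i _.
  case: (Pb w i); case: (i =P j); case: (i.+1 =P j); lia.
rewrite E1 E2 E3 sum_eq1S ?sum_eq1 //; [lia|lia|lia].
Qed.

Lemma Pb_adj w j : (Pb w j.-1 : nat) + Pb w j <= (0 < j < size w).
Proof.
rewrite /Pb; case: j => [|j] //=; case: j => [|j] /=; try lia.
Qed.

Lemma sum_const1 N : \sum_(0 <= i < N) 1 = N.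
Proof. by rewrite sum_nat_const_nat muln1 subn0. Qed.

Lemma sum_mid s : 0 < s -> \sum_(0 <= j < s.+1) ((0 < j < s) : nat) = s.-1.
Proof.
move=> s0.
have := count_iota_sum predT 1 s.-1 s.+1.
rewrite count_predT size_iota => ->; last lia.
by apply: eq_big_nat => i _ /=; lia.
Qed.

Lemma slots_peaks k a w : 0 < size w -> all (fun x => x < a) w ->
  count (fun j => ipeaks (ins j a w) == k) (iota 0 (size w).+1) =
  (ipeaks w == k) * (2 * ipeaks w + 2) + (ipeaks w + 1 == k) * (size w - 1 - 2 * ipeaks w).
Proof.
move=> s0 aw; set s := size w; set p := ipeaks w.
rewrite count_sum0.
pose c j := (0 < j < s) - Pb w j.-1 - Pb w j.
have V : forall j, j < s.+1 -> ipeaks (ins j a w) = p + c j.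
  move=> j js; have := ipeaks_ins j a w _ aw; have := Pb_adj w j.
  rewrite /c -/s -/p; lia.
have C1 : forall j, c j <= 1 by move=> j; rewrite /c; lia.
have -> : \sum_(0 <= j < s.+1) (ipeaks (ins j a w) == k : nat) =
   \sum_(0 <= j < s.+1) ((p == k) * (1 - c j) + (p + 1 == k) * c j).
  apply: eq_big_nat => j /= js; rewrite V //; have := C1 j.
  case: (p =P k); case: (p + 1 =P k); case: (p + c j =P k); lia.
rewrite big_split /= -!big_distrr /=.
have S1 : \sum_(0 <= j < s.+1) c j + 2 * p = s.-1.
  have P1 : \sum_(0 <= j < s.+1) (Pb w j.-1 : nat) = p.
    rewrite sum_shift //= /p (ipeaks_sum w s) //.
  have P2 : \sum_(0 <= j < s.+1) (Pb w j : nat) = p.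
    by rewrite /p (ipeaks_sum w s.+1).
  rewrite -(sum_mid s s0).
  have -> : 2 * p = \sum_(0 <= j < s.+1) (Pb w j.-1 : nat) + \sum_(0 <= j < s.+1) (Pb w j : nat)
    by rewrite P1 P2; lia.
  rewrite addnA -!big_split /=; apply: eq_big_nat => j _.
  have := Pb_adj w j; rewrite /c; lia.
have S2 : \sum_(0 <= j < s.+1) (1 - c j) + \sum_(0 <= j < s.+1) c j = s.+1.
  rewrite -big_split /=; rewrite -[in RHS](sum_const1 s.+1); apply: eq_big_nat => j _.
  have := C1 j; lia.
have -> : \sum_(0 <= j < s.+1) (1 - c j) = 2 * p + 2 by lia.
have -> : \sum_(0 <= j < s.+1) c j = s - 1 - 2 * p by lia.
by [].
Qed.

Lemma sum_eq1S' (F : nat -> nat) j N : j <= N ->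
  \sum_(0 <= i < N) ((i.+1 == j) * F i) = (0 < j) * F j.-1.
Proof.
move=> jN; case: j jN => [|j] jN.
  by rewrite big1 // => i _.
rewrite (eq_big_nat _ _ (F2 := fun i => (i == j) * F i)); last by [].
by rewrite sum_eq1 // mul1n.
Qed.

Lemma des_ins j a w : j <= size w -> all (fun x => x < a) w ->
  des (ins j a w) + ((0 < j) && Db w j.-1) = des w + (j < size w).
Proof.
move=> jw aw.
set s := size w.
rewrite (des_sum _ s.+2) ?size_ins //.
rewrite (des_sum w s.+2) //; last lia.
under eq_big_nat => i _ do rewrite Db_ins //.
rewrite !big_split /=.
have E1 : \sum_(0 <= i < s.+2) ((i == j) && (j < s) : nat) = (j < s).
  rewrite -(sum_eq1 (fun _ => (j < s) : nat) j s.+2); last lia.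
  by apply: eq_big_nat => i _; case: (i =P j) => ?; case: (j < s); lia.
have E2 : \sum_(0 <= i < s.+2) ((j < i) && Db w i.-1 : nat) =
          \sum_(0 <= i < s.+2) ((j <= i) && Db w i : nat).
  rewrite sum_shift //= (sum_ext _ s.+1 s.+2) //.
  move=> i hi; rewrite /Db; lia.
have E3 : \sum_(0 <= i < s.+2) (Db w i : nat) =
   \sum_(0 <= i < s.+2) ((i.+1 < j) && Db w i : nat) +
   \sum_(0 <= i < s.+2) ((i.+1 == j) * Db w i) +
   \sum_(0 <= i < s.+2) ((j <= i) && Db w i : nat).
  rewrite -!big_split /=; apply: eq_big_nat => i _.
  case: (Db w i); case: (i.+1 =P j); lia.
rewrite E1 E2 E3 sum_eq1S'; last lia.
case: (0 < j); case: (Db w j.-1); lia.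
Qed.

Lemma nodd_dd w i : ~~ has_ddes w -> ~~ dd w i.
Proof.
rewrite /has_ddes => /hasPn H; apply/negP => /and3P [h1 h2 h3].
have := H i; rewrite mem_iota h2 h3 /=; lia.
Qed.

Lemma hdd_ins j a w : j <= size w -> all (fun x => x < a) w -> ~~ has_ddes w ->
  has_ddes (ins j a w) = Db w j.
Proof.
move=> jw aw nd.
set s := size w.
rewrite (hdd_sum _ s.+2) ?size_ins //.
under eq_big_nat => i _ do rewrite dd_ins //.
have Z : forall i, dd w i = false by move=> i; apply/negbTE/nodd_dd.
rewrite (eq_big_nat _ _ (F2 := fun i => (i == j) * Db w j)); last first.
  move=> i _; rewrite !Z; case: (i =P j); lia.
rewrite sum_eq1; last lia.
by case: (Db w j).
Qed.

Lemma filter_ins j a w k : k <= a ->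
  [seq x <- ins j a w | x < k] = [seq x <- w | x < k].
Proof.
move=> ka; rewrite /ins filter_cat /=.
have -> : (a < k) = false by lia.
by rewrite -filter_cat cat_take_drop.
Qed.

Lemma simsun_ins j a w : size w = a -> all (fun x => x < a) w ->
  simsun (ins j a w) = simsun w && ~~ has_ddes (ins j a w).
Proof.
move=> sw aw; rewrite /simsun size_ins.
have -> : iota 1 (size w).+1 = iota 1 (size w) ++ [:: (size w).+1].
  by rewrite -[(size w).+1]addn1 iotaD add1n addn1.
rewrite all_cat /= andbT.
congr andb.
  apply: eq_in_all => k; rewrite mem_iota => hk; rewrite filter_ins //; lia.
congr negb; congr has_ddes; apply/all_filterP/allP => x; rewrite mem_ins.
case/orP => [/eqP ->|/(allP aw)]; lia.
Qed.

Lemma simsun_nodd w : all (fun x => x < size w) w -> simsun w -> ~~ has_ddes w.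
Proof.
move=> aw; case: (posnP (size w)) => [/size0nil -> //|s0].
rewrite /simsun => /allP /(_ (size w)); rewrite mem_iota.
have -> : [seq x <- w | x < size w] = w by apply/all_filterP.
apply; lia.
Qed.

Lemma slots_simsun k w : all (fun x => x < size w) w ->
  count (fun j => simsun (ins j (size w) w) && (des (ins j (size w) w) == k)) (iota 0 (size w).+1) =
  simsun w * ((des w == k) * (des w + 1) + (des w + 1 == k) * (size w - 2 * des w)).
Proof.
move=> aw; set s := size w; set d := des w.
rewrite count_sum0.
case sw: (simsun w); last first.
  rewrite mul0n big1 // => j _; rewrite simsun_ins // sw //.
have nd := simsun_nodd w aw sw.
rewrite mul1n.
pose e j := (j < s) - ((0 < j) && Db w j.-1).
have Dj : forall j, (0 < j) && Db w j.-1 -> j < s.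
  by move=> [|j] //=; rewrite /Db; lia.
have V : forall j, j < s.+1 -> des (ins j s w) = d + e j.
  move=> j js; have := des_ins j s w _ aw; have := Dj j.
  rewrite /e -/s -/d; lia.
have C1 : forall j, e j <= 1 by move=> j; rewrite /e; lia.
have DD : forall j, Db w j -> e j = 1.
  move=> [|j] hj; rewrite /e; first by move: hj; rewrite /Db; lia.
  have := nodd_dd w j nd; move: hj; rewrite /Db /dd /=; lia.
have -> : \sum_(0 <= j < s.+1) (simsun (ins j s w) && (des (ins j s w) == k) : nat) =
   \sum_(0 <= j < s.+1) ((d == k) * (~~ Db w j * (1 - e j)) + (d + 1 == k) * (~~ Db w j * e j)).
  apply: eq_big_nat => j /= js; rewrite simsun_ins // sw hdd_ins // V //.
  have := C1 j; have := DD j.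
  case: (Db w j); case: (d =P k); case: (d + 1 =P k); case: (d + e j =P k); lia.
rewrite big_split /= -!big_distrr /=.
have S1 : \sum_(0 <= j < s.+1) e j + d = s.
  have P1 : \sum_(0 <= j < s.+1) ((0 < j) && Db w j.-1 : nat) = d.
    rewrite sum_shift //= /d (des_sum w s) //.
  have P0 : \sum_(0 <= j < s.+1) ((j < s) : nat) = s.
    rewrite -{3}(size_iota 0 s) -(count_predT (iota 0 s)) (count_iota_sum _ _ _ s.+1) //.
    by apply: eq_big_nat => j _ /=; lia.
  rewrite -{2}P0 -P1 -big_split /=; apply: eq_big_nat => j _.
  have := Dj j; rewrite /e; lia.
have S2 : \sum_(0 <= j < s.+1) (~~ Db w j * e j) + d = \sum_(0 <= j < s.+1) e j.
  have P2 : \sum_(0 <= j < s.+1) (Db w j : nat) = d by rewrite /d (des_sum w s.+1).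
  rewrite -P2 -big_split /=; apply: eq_big_nat => j _.
  have := DD j; case: (Db w j); lia.
have S3 : \sum_(0 <= j < s.+1) (~~ Db w j * (1 - e j)) + \sum_(0 <= j < s.+1) e j = s.+1.
  rewrite -big_split /=; rewrite -[in RHS](sum_const1 s.+1); apply: eq_big_nat => j _.
  have := DD j; have := C1 j; case: (Db w j); lia.
have -> : \sum_(0 <= j < s.+1) (~~ Db w j * (1 - e j)) = d + 1 by lia.
have -> : \sum_(0 <= j < s.+1) (~~ Db w j * e j) = s - 2 * d by lia.
by [].
Qed.

Lemma peaks_bound w : 0 < size w -> 2 * ipeaks w < size w.
Proof.
move=> s0; set s := size w.
have P1 : \sum_(0 <= j < s.+1) (Pb w j.-1 : nat) = ipeaks w.
  by rewrite sum_shift //= (ipeaks_sum w s).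
have P2 : \sum_(0 <= j < s.+1) (Pb w j : nat) = ipeaks w.
  by rewrite (ipeaks_sum w s.+1).
have := sum_mid s s0.
have : \sum_(0 <= j < s.+1) ((Pb w j.-1 : nat) + Pb w j) <= \sum_(0 <= j < s.+1) ((0 < j < s) : nat).
  by apply: leq_sum => j _; apply: Pb_adj.
rewrite big_split /= P1 P2; lia.
Qed.

Definition Wc m k := count (fun w => ipeaks w == k) (perms m).
Definition Sc m k := count (fun w => simsun w && (des w == k)) (perms m).

Lemma count_allpairs (P : pred (seq nat)) (f : seq nat -> nat -> seq nat) s t :
  count P [seq f x y | x <- s, y <- t] = sumn [seq count P [seq f x y | y <- t] | x <- s].
Proof. by elim: s => //= x s IH; rewrite count_cat IH. Qed.

Lemma sumn_lin (T : Type) (a b : nat) (f g : T -> nat) s :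
  sumn [seq a * f x + b * g x | x <- s] = a * sumn [seq f x | x <- s] + b * sumn [seq g x | x <- s].
Proof. elim: s => /=; [lia | move=> x s ->; lia]. Qed.

Lemma Wc_rec n k : 0 < n ->
  Wc n.+1 k = (2 * k + 2) * Wc n k + (n.+1 - 2 * k) * count (fun w => ipeaks w + 1 == k) (perms n).
Proof.
move=> n0; rewrite /Wc permsS count_allpairs.
rewrite (eq_in_map _ (fun w => (2 * k + 2) * (ipeaks w == k) + (n.+1 - 2 * k) * (ipeaks w + 1 == k)) (perms n)).1.
  by rewrite sumn_lin !sumn_count.
move=> w /perms_ok /and3P [/eqP sw _ aw].
rewrite count_map; have := slots_peaks k n w; rewrite sw => ->; [|lia|done].
case: (ipeaks w =P k); case: (ipeaks w + 1 =P k); lia.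
Qed.

Lemma Sc_rec n k :
  Sc n.+1 k = (k + 1) * Sc n k + (n.+2 - 2 * k) * count (fun w => simsun w && (des w + 1 == k)) (perms n).
Proof.
rewrite /Sc permsS count_allpairs.
rewrite (eq_in_map _ (fun w => (k + 1) * (simsun w && (des w == k)) + (n.+2 - 2 * k) * (simsun w && (des w + 1 == k))) (perms n)).1.
  by rewrite sumn_lin !sumn_count.
move=> w /perms_ok /and3P [/eqP sw _ aw].
rewrite count_map; have := slots_simsun k w; rewrite sw => ->; last done.
case: (simsun w); case: (des w =P k); case: (des w + 1 =P k); lia.
Qed.

Lemma main_nat n k : 2 ^ k * Wc n.+1 k = 2 ^ n * Sc n k.
Proof.
elim: n k => [|n IH] k.
  by case: k => [|k]; rewrite /Wc /Sc /= ?muln0.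
rewrite Wc_rec // Sc_rec.
case: k => [|k].
  have -> : count (fun w => ipeaks w + 1 == 0) (perms n.+1) = 0.
    by apply/eqP; rewrite -leqn0 leqNgt -has_count; apply/hasPn => w _; rewrite addn1.
  have -> : count (fun w => simsun w && (des w + 1 == 0)) (perms n) = 0.
    by apply/eqP; rewrite -leqn0 leqNgt -has_count; apply/hasPn => w _; rewrite addn1 andbF.
  have := IH 0; rewrite !expn0 expnS; lia.
have -> : count (fun w => ipeaks w + 1 == k.+1) (perms n.+1) = Wc n.+1 k.
  by apply: eq_count => w; rewrite addn1 eqSS.
have -> : count (fun w => simsun w && (des w + 1 == k.+1)) (perms n) = Sc n k.
  by apply: eq_count => w; rewrite addn1 eqSS.
have h1 := IH k.+1; have h2 := IH k.
rewrite expnS in h1 *; rewrite [2 ^ n.+1]expnS.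
nia.
Qed.

Lemma Wc_zero m k : 0 < m -> m <= 2 * k -> Wc m k = 0.
Proof.
move=> m0 mk; rewrite /Wc; apply/eqP; rewrite -leqn0 leqNgt -has_count.
apply/hasPn => w /perms_ok /and3P [/eqP sw _ _].
have := peaks_bound w; rewrite sw => h; have := h m0.
case: (ipeaks w =P k); lia.
Qed.

Lemma part1 n k : (k <= n)%N -> Wnk n.+1 k = (2 ^ (n - k) * Snk n k)%N.
Proof.
move=> kn; rewrite /Wnk /Snk (card_perms n.+1 (fun w => ipeaks w == k)) (card_perms n (fun w => simsun w && (des w == k))) -/(Wc n.+1 k) -/(Sc n k).
apply/eqP; rewrite -(@eqn_pmul2l (2 ^ k)) ?expn_gt0 // main_nat mulnA -expnD subnKC //.
Qed.


Module RingPart.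
Local Open Scope ring_scope.

Lemma stirling2_gt m i : (m < i)%N -> stirling2 m i = 0%N.
Proof.
elim: m i => [|m IH] [|i] //= h.
by rewrite !IH //; lia.
Qed.

Lemma binz_I1 i z : (i%:Z) * binz i z = z * binz i z + (z + 1) * binz i (z + 1).
Proof.
case: z => [j|j].
  have -> : (Posz j + 1) = Posz j.+1 by rewrite -addn1 PoszD.
  rewrite /= -!PoszM -PoszD; congr Posz.
  have := mul_bin_left i j.
  case: (leqP j i) => h; first nia.
  rewrite !bin_small //; lia.
case: j => [|j].
  have -> : Negz 0 + 1 = 0 by [].
  by rewrite /= !mulr0 mul0r addr0.
have -> : Negz j.+1 + 1 = Negz j by rewrite !NegzE; lia.
by rewrite /= !mulr0 addr0.
Qed.

Lemma binz_I2 i z : binz i.+1 z = binz i z + binz i (z - 1).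
Proof.
case: z => [j|j].
  case: j => [|j].
    by rewrite /= !bin0 addr0.
  have -> : Posz j.+1 - 1 = Posz j by lia.
  by rewrite /= binS PoszD addrC.
have -> : Negz j - 1 = Negz j.+1 by rewrite !NegzE; lia.
by [].
Qed.

Definition e (m i : nat) : int := ((i`! * stirling2 m i)%:Z * (-2) ^+ (m - i)).

Lemma e_rec m i : e m.+1 i = i%:Z * (- 2 * e m i + e m i.-1).
Proof.
rewrite /e; case: i => [|i]; first by rewrite /= !muln0 !mul0r.
rewrite factS /= subSS.
case: (leqP i.+1 m) => h.
  have -> : (m - i = (m - i.+1).+1)%N by lia.
  rewrite exprS !PoszM !PoszD !PoszM; ring.
rewrite (stirling2_gt m i.+1) //.
rewrite !PoszM !PoszD !PoszM; ring.
Qed.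

Definition A (m : nat) (z : int) : int := \sum_(0 <= i < m.+1) e m i * binz i z.

Lemma e_gt m i : (m < i)%N -> e m i = 0.
Proof. by move=> h; rewrite /e stirling2_gt // muln0 mul0r. Qed.

Lemma A_rec m z : A m.+1 z = A m z - (z + 1) * A m (z + 1) + z * A m (z - 1).
Proof.
rewrite /A.
under eq_big_nat => i _ do rewrite e_rec.
have -> : \sum_(0 <= i < m.+2) i%:Z * (-2 * e m i + e m i.-1) * binz i z =
  \sum_(0 <= i < m.+2) (- 2) * (e m i * (i%:Z * binz i z)) +
  \sum_(0 <= i < m.+2) e m i.-1 * (i%:Z * binz i z).
  rewrite -big_split /=; apply: congr_big => // i _; ring.
rewrite (big_nat_recr m.+1 0 (fun i => -2 * (e m i * (i%:Z * binz i z)))) //= e_gt // mul0r mulr0 addr0.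
rewrite (big_nat_recl m.+1 0 (fun i => e m i.-1 * (i%:Z * binz i z))) //= mul0r mulr0 add0r.
rewrite !mulr_sumr -sumrN -!big_split /=; apply: eq_bigr => i _.
rewrite binz_I1 (binz_I1 i.+1) !binz_I2.
have -> : z + 1 - 1 = z by ring.
ring.
Qed.

Definition D (m : nat) (z : int) : int := A m (z - 1) - A m z.

Lemma D_rec m z : D m.+1 z = (z - 1) * D m (z - 1) - (z + 1) * D m (z + 1).
Proof.
rewrite /D !A_rec.
have -> : z - 1 + 1 = z by ring.
have -> : z + 1 - 1 = z by ring.
ring.
Qed.

Lemma binz_neg i z : z < 0 -> binz i z = 0.
Proof. by case: z. Qed.

Lemma A_big m j : (m < j)%N -> A m (Posz j) = 0.
Proof.
move=> h; rewrite /A big1_seq // => i; rewrite mem_index_iota /= => hi.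
rewrite bin_small ?mulr0 //; lia.
Qed.

Lemma e0 m : e m.+1 0 = 0.
Proof. by rewrite /e /= muln0 mul0r. Qed.

Lemma pp_D m k : (0 < m)%N -> pp m k%:Z = (-1) ^+ k * D m (m%:Z - 2 * k%:Z + 1).
Proof.
case: m => [|m] // _.
rewrite /pp /D /A; congr (_ * _).
have -> : m.+1%:Z - 2 * k%:Z + 1 - 1 = m.+1%:Z - 2 * k%:Z by ring.
rewrite -sumrB (big_nat_recl m.+1 0) // e0 !mul0r subrr add0r big_add1 /=.
by apply: eq_bigr => i _; rewrite /e mulrBr.
Qed.

Lemma sgn2 k : ((-1) ^+ k * (-1) ^+ k = 1 :> int).
Proof. by rewrite -exprMn mulrNN mulr1 expr1n. Qed.

Lemma D_pp m k : (0 < m)%N -> D m (m%:Z - 2 * k%:Z + 1) = (-1) ^+ k * pp m k%:Z.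
Proof. by move=> h; rewrite pp_D // mulrA sgn2 mul1r. Qed.

Lemma pp_rec0 m : (0 < m)%N -> pp m.+1 0 = m.+1%:Z * pp m 0.
Proof.
move=> h; rewrite (pp_D m.+1 0) // D_rec.
have -> : m.+1%:Z - 2 * 0%:Z + 1 - 1 = m%:Z - 2 * 0%:Z + 1 by lia.
rewrite D_pp // /D.
have -> : m.+1%:Z - 2 * 0%:Z + 1 + 1 - 1 = Posz m.+2 by lia.
have -> : m.+1%:Z - 2 * 0%:Z + 1 + 1 = Posz m.+3 by lia.
rewrite A_big; last lia. rewrite A_big; last lia.
have -> : m%:Z - 2 * 0%:Z + 1 = m.+1%:Z by lia.
rewrite expr0 !mul1r subrr mulr0 subr0 //.
Qed.

Lemma pp_recS m k : (0 < m)%N ->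
  pp m.+1 k.+1 = (m%:Z - 1 - 2 * k%:Z) * pp m k.+1 + (m%:Z + 1 - 2 * k%:Z) * pp m k.
Proof.
move=> h; rewrite (pp_D m.+1 k.+1) // D_rec.
have -> : m.+1%:Z - 2 * k.+1%:Z + 1 - 1 = m%:Z - 2 * k.+1%:Z + 1 by lia.
have -> : m.+1%:Z - 2 * k.+1%:Z + 1 + 1 = m%:Z - 2 * k%:Z + 1 by lia.
rewrite !D_pp // !exprS.
have E := sgn2 k; set s := (-1) ^+ k in E *.
transitivity ((s * s) * ((m%:Z - 1 - 2 * k%:Z) * pp m k.+1 + (m%:Z + 1 - 2 * k%:Z) * pp m k)).
  have -> : k.+1%:Z = k%:Z + 1 by lia.
  ring.
by rewrite E mul1r.
Qed.

Lemma pp_zero m k : (m.+2 <= 2 * k)%N -> pp m k%:Z = 0.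
Proof.
move=> h; rewrite /pp big1 ?mulr0 // => i _.
rewrite !binz_neg ?subrr ?mulr0 //; lia.
Qed.
Local Open Scope ring_scope.

Section Poly.
Variable R : numFieldType.

Definition Pp (m : nat) : {poly R} := \poly_(k < m.+1) ((pp m k%:Z)%:~R).
Definition Qp (m : nat) : {poly R} := \poly_(k < m.+1) (if k is j.+1 then (Wc m j)%:R else 0).

Lemma coef_Pp m k : (Pp m)`_k = (pp m k%:Z)%:~R.
Proof.
rewrite coef_poly; case: ifP => // h.
by rewrite pp_zero //; lia.
Qed.

Lemma coef_Qp m k : (0 < m)%N -> (Qp m)`_k = if k is j.+1 then (Wc m j)%:R else 0.
Proof.
move=> m0; rewrite coef_poly; case: ifP => // h.
by case: k h => [|j] // h; rewrite Wc_zero //; lia.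
Qed.

Lemma RP m : (0 < m)%N ->
  Pp m.+1 = (m.+1)%:R *: (Pp m + 'X * Pp m) - 2%:R *: ('X * (Pp m)^`() + 'X * ('X * (Pp m)^`())).
Proof.
move=> m0; apply/polyP => i.
rewrite coef_Pp !(coefD, coefB, coefN, coefZ, coefXM, coef_deriv) !coef_Pp.
case: i => [|i] /=.
  rewrite pp_rec0 //; ring.
case: i => [|i] /=.
  rewrite (pp_recS m 0) //; ring.
rewrite (pp_recS m i.+1) //; ring.
Qed.

Lemma RQ m : (0 < m)%N ->
  Qp m.+1 = 2%:R *: ('X * (Qp m)^`() - 'X * ('X * (Qp m)^`())) + (m.+1)%:R *: ('X * Qp m).
Proof.
move=> m0; apply/polyP => i.
rewrite coef_Qp // !(coefD, coefB, coefN, coefZ, coefXM, coef_deriv) !coef_Qp //.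
case: i => [|i] /=; first by ring.
case: i => [|i] /=.
  rewrite Wc_rec //.
  have -> : count (fun w => ipeaks w + 1 == 0)%N (perms m) = 0%N.
    by apply/eqP; rewrite -leqn0 leqNgt -has_count; apply/hasPn => w _; rewrite addn1.
  ring.
rewrite Wc_rec //.
have -> : count (fun w => ipeaks w + 1 == i.+1)%N (perms m) = Wc m i.
  by apply: eq_count => w; rewrite addn1 eqSS.
case: (leqP m (2 * i)) => h.
  rewrite (Wc_zero m i) //; ring.
rewrite (natrD _ _ ((m.+1 - 2 * i.+1) * _)%N) (natrM _ (m.+1 - 2 * i.+1)%N) natrB; last lia.
ring.
Qed.

Lemma Pp1 : Pp 1 = 1 + 'X.
Proof.
apply/polyP => i; rewrite coef_Pp coefD coef1 coefX.
case: i => [|[|i]].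
- have -> : pp 1 0%:Z = 1 by rewrite /pp big_nat1; vm_compute.
  by rewrite addr0.
- have -> : pp 1 1%:Z = 1 by rewrite /pp big_nat1; vm_compute.
  by rewrite add0r.
- rewrite pp_zero; last lia.
  by rewrite /= addr0.
Qed.

Lemma Wc10 : Wc 1 0 = 1%N.
Proof. by []. Qed.

Lemma Qp1 : Qp 1 = 'X.
Proof.
apply/polyP => i; rewrite coef_Qp // coefX.
by case: i => [|[|i]].
Qed.

Lemma QP m : (0 < m)%N -> Qp m = Pp m \Po ('X - 1).
Proof.
elim: m => [|m IH] // _.
case: (posnP m) => [->|m0].
  by rewrite Qp1 Pp1 comp_polyD comp_polyX -polyC1 comp_polyC polyC1 addrC subrK.
have dX : ('X - 1 : {poly R})^`() = 1 by rewrite derivB derivX -polyC1 derivC subr0.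
rewrite RQ // IH // RP // deriv_comp dX mulr1.
rewrite !(comp_polyB, comp_polyD, comp_polyZ, comp_polyM, comp_polyX).
rewrite -!mul_polyC; ring.
Qed.
End Poly.
Local Open Scope ring_scope.

Lemma part2 (R : numFieldType) (n : nat) (x : R) : (1 <= n)%N -> x != 0 ->
  Spoly_eval n x =
  ((2 ^+ n.+1 * x)^-1 * \sum_(k < n./2 + 2) (pp n.+1 (k%:Z))%:~R * (2 * x - 1) ^+ k).
Proof.
move=> n1 x0.
set t := 2 * x.
have two0 : (2 : R) != 0 by rewrite pnatr_eq0.
have E1 : \sum_(k < n./2 + 2) (pp n.+1 (k%:Z))%:~R * (t - 1) ^+ k = (Pp R n.+1).[t - 1].
  rewrite horner_poly (big_ord_widen (n.+2) (fun k => (pp n.+1 k%:Z)%:~R * (t - 1) ^+ k)); last lia.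
  rewrite big_mkcond /=; apply: eq_bigr => i _; case: ifP => // h.
  by rewrite pp_zero ?mul0r //; lia.
have E2 : (Pp R n.+1).[t - 1] = (Qp R n.+1).[t].
  by rewrite QP // horner_comp !hornerE.
have E3 : (Qp R n.+1).[t] = t * \sum_(j < n) (Wc n.+1 j)%:R * t ^+ j.
  rewrite horner_poly big_ord_recl /= mul0r add0r big_ord_recr /= Wc_zero //; last lia.
  rewrite mul0r addr0 mulr_sumr; apply: eq_bigr => i _; rewrite exprS; ring.
have E4 : Spoly_eval n x = (2 ^+ n)^-1 * \sum_(j < n) (Wc n.+1 j)%:R * t ^+ j.
  rewrite /Spoly_eval mulr_sumr; apply: eq_bigr => j _.
  have M := main_nat n j.
  have M' : (2 ^+ j * (Wc n.+1 j)%:R : R) = 2 ^+ n * (Sc n j)%:R.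
    by rewrite -natrX -natrM M natrM natrX.
  rewrite /Snk (card_perms n (fun w => simsun w && (des w == j))) -/(Sc n j) /t exprMn.
  have -> : (Sc n j)%:R = (2 ^+ n)^-1 * (2 ^+ j * (Wc n.+1 j)%:R) :> R.
    by rewrite M' mulrA mulVf ?mul1r // expf_neq0.
  ring.
rewrite E4 E1 E2 E3 /t.
rewrite exprS; set p := (2 : R) ^+ n.
have p0 : p != 0 by rewrite expf_neq0.
field.
by rewrite p0 x0.
Qed.

End RingPart.

Theorem proposition1 :
  forall n : nat, (1 <= n)%N ->
    (forall k : nat, (k <= n./2)%N -> Wnk n.+1 k = (2 ^ (n - k) * Snk n k)%N)
    /\
    (forall (R : numFieldType) (x : R), (x != 0)%R ->
       Spoly_eval n x =
       ((2 ^+ n.+1 * x)^-1 *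
        \sum_(k < n./2 + 2) (pp n.+1 (k%:Z))%:~R * (2 * x - 1) ^+ k)%R).
Proof.
move=> n n1; split.
  move=> k kn; apply: part1.
  lia.
move=> R x x0; exact: RingPart.part2.
Qed.
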